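(* Let $P$ and $Q$ be probability distributions on a countable password space $\mathcal{PW}$ (discrete case) such that $Q(pw)>0$ whenever $P(pw)>0$, and let $k\ge 2$. Define $G(x)=\Pr_{pw\gets Q}\!\left[\frac{P(pw)}{Q(pw)}\le x\right]$ and $G(x^-)=\Pr_{pw\gets Q}\!\left[\frac{P(pw)}{Q(pw)}< x\right]$. Then the flatness satisfies $$\epsilon(1)=\sum_{x}\frac{1}{k}\,x\left[G^{k}(x)-G^{k}(x^-)\right],$$ where the sum ranges over the values $x$ taken by $P(pw)/Q(pw)$ for $pw$ with $Q(pw)>0$.
   Context: The flatness game $FlatGame^{P,Q,k}_{\mathcal{A}}(n)$: sample a password $pw\gets P$ and $k-1$ honeywords independently from $Q$; form the list of these $k$ words and shuffle it uniformly at random. The attacker $\mathcal{A}$ (any probabilistic Turing machine, which may know $P$ and $Q$) receives the shuffled list and outputs $n$ guesses (positions in the list); it wins if the position holding $pw$ is among its guesses. $\epsilon(1)=\max_{\mathcal{A}}\Pr[FlatGame^{P,Q,k}_{\mathcal{A}}(1)=1]$ is the flatness. *)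

(* Defs.v *)
From HB Require Import structures.
From mathcomp Require Import all_boot all_order all_algebra all_fingroup.
From mathcomp Require Import all_classical all_reals.
From mathcomp Require Import ereal esum.
Unset Printing Implicit Defensive.
Import Order.TTheory GRing.Theory Num.Theory.
Local Open Scope classical_set_scope.
Local Open Scope ring_scope.

Section Flat.
Variables (R : realType) (T : countType).

Definition is_distr (D : T -> R) : Prop :=
  (forall x, 0 <= D x) /\ (\esum_(x in [set: T]) (D x)%:E = 1%E).

(* A probabilistic attacker: given the shuffled list w of k words, it outputs
   position i with probability A w i. *)
Definition is_attacker (k : nat) (A : {ffun 'I_k -> T} -> 'I_k -> R) : Prop :=
  forall w, (forall i, 0 <= A w i) /\ \sum_(i < k) A w i = 1.

(* Pre-shuffle list t: position j with val j = 0 holds pw ~ P, the other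
   k-1 positions hold independent honeywords ~ Q.  A uniform permutation s
   is applied: the shuffled list is w with w (s j) = t j, and pw ends up at
   position s j0 (val j0 = 0).  game_prob w i = Pr[shuffled list = w and pw is
   at position i]. *)
Definition game_prob (P Q : T -> R) (k : nat) (w : {ffun 'I_k -> T}) (i : 'I_k)
  : R :=
  \sum_(s : 'S_k) (k`!%:R)^-1 * (nat_of_ord ((s^-1)%g i) == 0)%:R *
     \prod_(j < k) (if nat_of_ord j == 0 then P (w (s j)) else Q (w (s j))).

Definition win_prob (P Q : T -> R) (k : nat)
  (A : {ffun 'I_k -> T} -> 'I_k -> R) : \bar R :=
  \esum_(w in [set: {ffun 'I_k -> T}])
     (\sum_(i < k) A w i * game_prob P Q k w i)%:E.

Definition is_flatness (P Q : T -> R) (k : nat) (e : \bar R) : Prop :=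
  (exists A, is_attacker k A /\ win_prob P Q k A = e) /\
  (forall A, is_attacker k A -> (win_prob P Q k A <= e)%E).

Definition Gle (P Q : T -> R) (x : R) : R :=
  fine (\esum_(pw in [set pw | P pw / Q pw <= x]) (Q pw)%:E).
Definition Glt (P Q : T -> R) (x : R) : R :=
  fine (\esum_(pw in [set pw | P pw / Q pw < x]) (Q pw)%:E).

Definition ratio_values (P Q : T -> R) : set R :=
  [set x | exists pw, 0 < Q pw /\ x = P pw / Q pw].

Definition flatness_formula (P Q : T -> R) (k : nat) : \bar R :=
  \esum_(x in ratio_values P Q)
     ((k%:R)^-1 * x * (Gle P Q x ^+ k - Glt P Q x ^+ k))%:E.

End Flat.
Arguments is_distr {R T}.
Arguments is_attacker {R T}.
Arguments game_prob {R T}.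
Arguments win_prob {R T}.
Arguments is_flatness {R T}.
Arguments Gle {R T}.
Arguments Glt {R T}.
Arguments ratio_values {R T}.
Arguments flatness_formula {R T}.

(* Main.v *)
Require Import Defs.
From HB Require Import structures.
From mathcomp Require Import all_boot all_order all_algebra all_fingroup.
From mathcomp Require Import all_classical all_reals.
From mathcomp Require Import ereal esum.
Import Order.TTheory GRing.Theory Num.Theory.
Local Open Scope classical_set_scope.
Local Open Scope ring_scope.

Lemma esumZl (R : realType) (T : choiceType) (S : set T) (a : T -> \bar R) (c : R) :
  (forall i, (0 <= a i)%E) -> 0 <= c ->
  \esum_(i in S) (c%:E * a i)%E = (c%:E * \esum_(i in S) a i)%E.
Proof.
move=> a0 c0; rewrite /esum -ereal_supZl //; last first.
  by apply/set0P; exists 0%E; exists set0; [exact: fsets_set0|rewrite fsbig_set0].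
congr ereal_sup; apply/seteqP; split=> x /=.
  by move=> [X XS <-]; exists (\sum_(i \in X) a i)%E; [exists X|rewrite ge0_mule_fsumr].
by move=> [_ [X XS <-] <-]; exists X => //; rewrite ge0_mule_fsumr.
Qed.

Definition econs (T : Type) (n : nat) (p : T * {ffun 'I_n -> T}) : {ffun 'I_n.+1 -> T} :=
  [ffun i => if unlift ord0 i is Some j then p.2 j else p.1].

Lemma econs0 T n p : @econs T n p ord0 = p.1.
Proof. by rewrite ffunE unlift_none. Qed.

Lemma econsS T n p j : @econs T n p (lift ord0 j) = p.2 j.
Proof. by rewrite ffunE liftK. Qed.

Lemma esum_prod (R : realType) (T : countType) (Q : T -> R) (S : set T) (n : nat) :
  (forall t, 0 <= Q t) -> \esum_(t in S) (Q t)%:E \is a fin_num ->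
  \esum_(w in [set w : {ffun 'I_n -> T} | forall i, S (w i)]) (\prod_(j < n) Q (w j))%:E
  = ((fine (\esum_(t in S) (Q t)%:E)) ^+ n)%:E.
Proof.
move=> Q0 fin; elim: n => [|n IH].
  have -> : [set w : {ffun 'I_0 -> T} | forall i, S (w i)] = [set ffun0 (card_ord 0)].
    apply/seteqP; split=> w /= _; last by case.
    by apply/ffunP => -[].
  by rewrite esum_set1 ?expr0 ?big_ord0 // lee_fin.
rewrite (reindex_esum (S `*` [set w : {ffun 'I_n -> T} | forall i, S (w i)]) _ (@econs T n)); last first.
  split.
  - move=> [t w] [/= St Sw] i; case: (unliftP ord0 i) => [j ->|->].
      by rewrite econsS.
    by rewrite econs0.
  - move=> [t w] [t' w'] _ _ /= /ffunP e.
    have := e ord0; rewrite !econs0 /= => ->.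
    congr pair; apply/ffunP => j.
    by have := e (lift ord0 j); rewrite !econsS.
  - move=> w /= Sw; exists (w ord0, [ffun j => w (lift ord0 j)]).
      by split => //= j; rewrite ffunE.
    apply/ffunP => i; rewrite ffunE; case: (unliftP ord0 i) => [j ->|->] /=.
      by rewrite ffunE.
    by [].
transitivity (\esum_(t in S) \esum_(w in [set w : {ffun 'I_n -> T} | forall i, S (w i)])
    ((Q t)%:E * (\prod_(j < n) Q (w j))%:E))%E.
  rewrite esum_esum; last by move=> *; rewrite mule_ge0 // lee_fin ?prodr_ge0.
  apply: eq_esum => -[t w] /= _.
  rewrite big_ord_recl econs0 /= EFinM; congr (_ * _)%E; congr EFin.
  by apply: eq_bigr => j _; rewrite econsS.
under eq_esum => t St.
  rewrite esumZl //; last by move=> w; rewrite lee_fin prodr_ge0.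
  rewrite IH muleC.
  over.
have s0 : 0 <= fine (\esum_(t in S) (Q t)%:E).
  by rewrite fine_ge0 // esum_ge0 // => ? _; rewrite lee_fin.
rewrite /= esumZl; [|by move=> ?; rewrite lee_fin|by rewrite exprn_ge0].
by rewrite -[X in (_ * X)%E](fineK fin) -EFinM exprSr.
Qed.
Lemma countN_eq n (i : 'I_n.+1) :
  (\sum_(s : 'S_n.+1) (s ord0 == i))%N = (\sum_(s : 'S_n.+1) (s ord0 == ord0))%N.
Proof.
rewrite (reindex_inj (mulIg (tperm ord0 i))) /=.
apply: eq_bigr => s _; rewrite permM.
by rewrite -[X in _ == X](tpermL ord0 i) (inj_eq (@perm_inj _ _)).
Qed.

Lemma countN n (i : 'I_n.+1) : (\sum_(s : 'S_n.+1) (s ord0 == i))%N = n`!.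
Proof.
have H : (\sum_(j < n.+1) \sum_(s : 'S_n.+1) (s ord0 == j))%N = n.+1`!.
  rewrite exchange_big /= -card_Sn -sum1_card; apply: eq_bigr => s _.
  by rewrite (bigD1 (s ord0)) //= eqxx big1 // => j /negbTE; rewrite eq_sym => ->.
move: H; under eq_bigr => j _ do rewrite countN_eq.
rewrite sum_nat_const card_ord factS countN_eq => /eqP.
by rewrite eqn_mul2l /= => /eqP.
Qed.

Lemma game_probE (R : realType) (T : countType) (P Q : T -> R) n
  (w : {ffun 'I_n.+1 -> T}) (i : 'I_n.+1) :
  (forall t, 0 <= P t) -> (forall t, 0 <= Q t) -> (forall t, 0 < P t -> 0 < Q t) ->
  game_prob P Q n.+1 w i = (n.+1%:R)^-1 * (P (w i) / Q (w i)) * \prod_(j < n.+1) Q (w j).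
Proof.
move=> P0 Q0 PQ.
pose X := P (w i) * \prod_(m < n.+1 | m != i) Q (w m).
transitivity (\sum_(s : 'S_n.+1) (n.+1`!%:R)^-1 * (s ord0 == i)%:R * X).
  apply: eq_bigr => s _.
  case: (eqVneq (s ord0) i) => e; last first.
    have -> : (nat_of_ord ((s^-1)%g i) == 0%N) = false.
      apply/negbTE; apply: contra_neq e => h.
      have h' : (s^-1)%g i = ord0 by apply: val_inj.
      by rewrite -h' permKV.
    by rewrite !mulr0 !mul0r.
  have -> : (nat_of_ord ((s^-1)%g i) == 0%N) = true.
    by rewrite -e permK.
  congr (_ * _).
  pose F m := if m == i then P (w m) else Q (w m).
  transitivity (\prod_(j < n.+1) F (s j)).
    apply: eq_bigr => j _; rewrite /F -e (inj_eq (@perm_inj _ s)).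
    by case: (eqVneq j ord0) => [->|] //; case: j => -[|j] //.
  have -> : \prod_(j < n.+1) F (s j) = \prod_(m < n.+1) F m.
    by rewrite [RHS](reindex_inj (@perm_inj _ s)).
  rewrite (bigD1 i) //= /F eqxx /X.
  by congr (_ * _); apply: eq_bigr => m /negbTE ->.
under eq_bigr do rewrite mulrAC.
rewrite -mulr_sumr -natr_sum countN mulrAC.
have -> : (n.+1`!%:R)^-1 * n`!%:R = (n.+1%:R)^-1 :> R.
  by rewrite factS natrM invfM -mulrA mulVf ?mulr1 // pnatr_eq0 -lt0n fact_gt0.
rewrite -mulrA; congr (_ * _); rewrite /X [X in _ = _ * X](bigD1 i) //=.
have [qpos|] := ltrP 0 (Q (w i)).
  by rewrite mulrA divfK ?gt_eqF.
move=> qle; have q0 : Q (w i) = 0 by apply/eqP; rewrite eq_le qle Q0.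
have p0 : P (w i) = 0.
  apply/eqP; rewrite eq_le P0 andbT leNgt; apply/negP => /PQ.
  by rewrite q0 ltxx.
by rewrite p0 q0 !mul0r.
Qed.

Lemma esum_sub_fin (R : realType) (T : countType) (Q : T -> R) (S : set T) :
  (forall t, 0 <= Q t) -> \esum_(t in [set: T]) (Q t)%:E = 1%E ->
  \esum_(t in S) (Q t)%:E \is a fin_num.
Proof.
move=> Q0 Q1; rewrite ge0_fin_numE; last by rewrite esum_ge0 // => ? _; rewrite lee_fin.
apply: (@le_lt_trans _ _ 1%E); last by rewrite ltry.
rewrite -Q1 esum_mkcond; apply: le_esum => t _.
by case: ifP => _; rewrite lee_fin.
Qed.

Definition amax (R : realType) (T : countType) (P Q : T -> R) n
  (w : {ffun 'I_n.+1 -> T}) : 'I_n.+1 :=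
  Order.arg_max ord0 xpredT (fun i => P (w i) / Q (w i)).

Lemma amax_ge (R : realType) (T : countType) (P Q : T -> R) n
  (w : {ffun 'I_n.+1 -> T}) j :
  P (w j) / Q (w j) <= P (w (@amax R T P Q n w)) / Q (w (@amax R T P Q n w)).
Proof. by rewrite /amax; case: arg_maxP => //= i _ H; exact: H. Qed.

Theorem theorem3 (R : realType) (T : countType) (P Q : T -> R) (k : nat) :
  is_distr P -> is_distr Q ->
  (forall pw, 0 < P pw -> 0 < Q pw) ->
  (2 <= k)%N ->
  is_flatness P Q k (flatness_formula P Q k).
Proof.
move=> [P0 P1] [Q0 Q1] PQ; case: k => [|[|n]] // _.
pose am (w : {ffun 'I_n.+2 -> T}) := @amax R T P Q n.+1 w.
pose Mx (w : {ffun 'I_n.+2 -> T}) := P (w (am w)) / Q (w (am w)).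
pose F (w : {ffun 'I_n.+2 -> T}) := (n.+2%:R)^-1 * Mx w * \prod_(j < n.+2) Q (w j).
have r0 t : 0 <= P t / Q t by rewrite divr_ge0.
have Fge0 w : 0 <= F w by rewrite mulr_ge0 ?mulr_ge0 ?invr_ge0 ?prodr_ge0.
have gpE w i := @game_probE R T P Q n.+1 w i P0 Q0 PQ.
have bound A : is_attacker n.+2 A ->
    forall w, \sum_i A w i * game_prob P Q n.+2 w i <= F w.
  move=> HA w; have [A0 A1] := HA w.
  rewrite -[F w]mul1r -A1 mulr_suml; apply: ler_sum => i _.
  rewrite gpE ler_wpM2l // /F ler_wpM2r ?prodr_ge0 // ler_wpM2l ?invr_ge0 //.
  exact: amax_ge.
pose Aopt := fun (w : {ffun 'I_n.+2 -> T}) (i : 'I_n.+2) => ((i == am w)%:R : R).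
have optA : is_attacker n.+2 Aopt.
  move=> w; split => [i|]; first by rewrite ler0n.
  by rewrite (bigD1 (am w)) //= /Aopt eqxx big1 ?addr0 // => j /negbTE ->.
have optE w : \sum_i Aopt w i * game_prob P Q n.+2 w i = F w.
  rewrite (bigD1 (am w)) //= /Aopt eqxx mul1r big1 ?addr0; last first.
    by move=> j /negbTE ->; rewrite mul0r.
  by rewrite gpE.
have main : \esum_(w in [set: {ffun 'I_n.+2 -> T}]) (F w)%:E = flatness_formula P Q n.+2.
  rewrite /flatness_formula.
  transitivity (\esum_(w in [set w | ratio_values P Q (Mx w)]) (F w)%:E).
    rewrite [RHS]esum_mkcond; apply: eq_esum => w _.
    case: ifPn => // /negP; rewrite inE => nV.
    case: (pickP (fun j => Q (w j) == 0)) => [j /eqP qj|allpos].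
      by rewrite /F (bigD1 j) //= qj mul0r mulr0.
    exfalso; apply: nV; exists (w (am w)); split => //.
    by have := allpos (am w); rewrite /= => /negbT qn; rewrite lt0r qn Q0.
  transitivity (\esum_(x in ratio_values P Q)
      \esum_(w in [set w | Mx w = x]) (F w)%:E); last first.
    apply: eq_esum => _ [t [qt ->]].
    set x := P t / Q t.
    transitivity (\esum_(w in [set w | Mx w = x])
        ((n.+2%:R^-1 * x)%:E * (\prod_(j < n.+2) Q (w j))%:E))%E.
      apply: eq_esum => w Mw; rewrite /F (_ : Mx w = x) ?EFinM //; exact: Mw.
    rewrite esumZl; [|by move=> w; rewrite lee_fin prodr_ge0|by rewrite mulr_ge0 ?invr_ge0 ?r0].
    have Hle : [set w | Mx w <= x] = [set w | forall i, [set pw | P pw / Q pw <= x] (w i)].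
      apply/seteqP; split => w /=.
        by move=> h i; exact: le_trans (@amax_ge R T P Q n.+1 w i) h.
      by move=> h; exact: h.
    have Hlt : [set w | Mx w < x] = [set w | forall i, [set pw | P pw / Q pw < x] (w i)].
      apply/seteqP; split => w /=.
        by move=> h i; exact: le_lt_trans (@amax_ge R T P Q n.+1 w i) h.
      by move=> h; exact: h.
    have E := esumID [set w | Mx w < x] [set w | Mx w <= x]
      (fun w => (\prod_(j < n.+2) Q (w j))%:E) (fun w _ => prodr_ge0 _ (fun j _ => Q0 (w j))).
    have e1 : [set w | Mx w <= x] `&` [set w | Mx w < x] = [set w | Mx w < x].
      apply/seteqP; split => w /=; first by case.
      by move=> h; split => //; exact: ltW.
    have e2 : [set w | Mx w <= x] `&` ~` [set w | Mx w < x] = [set w | Mx w = x].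
      apply/seteqP; split => w /=.
        move=> [h1 h2]; apply/eqP; rewrite eq_le h1 /= leNgt; exact/negP.
      by move=> ->; split; [exact: lexx|rewrite ltxx].
    rewrite e1 e2 Hle Hlt !esum_prod in E; try exact: Q0; try exact: esum_sub_fin.
    rewrite /Gle /Glt [in RHS]EFinM EFinB E (addeC _ (esum _ _)) addeK //.
  rewrite esum_esum; last by move=> *; rewrite lee_fin.
  rewrite (reindex_esum (ratio_values P Q `*`` (fun x => [set w | Mx w = x])) _ snd) //.
  split.
  - move=> [x w] /= [Vx Mw]; rewrite (_ : Mx w = x) //; exact: Mw.
  - by move=> [x w] [x1 w1]; rewrite !inE /= => -[_ h1] [_ h2] e; rewrite e in h1 *; rewrite -(h1 : Mx w1 = x) -(h2 : Mx w1 = x1).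
  - by move=> w /= Vw; exists (Mx w, w).
split.
  exists Aopt; split => //; rewrite /win_prob -main; apply: eq_esum => w _.
  by rewrite optE.
move=> A HA; rewrite /win_prob -main; apply: le_esum => w _; rewrite lee_fin.
exact: bound.
Qed.
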